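(* Let $f,g:\mathbb{R}^n\to\mathbb{R}$ satisfy assumptions (A1)–(A4) below, let $\zeta\in[0,1)$ and let $x_0\in\Omega=\{x: g(x)\le 0\}$. Then the trajectory $x(t;\zeta,x_0)$ stays, for all $t$ in its maximal existence interval, within the set $B_{f(x_0)}=\{x: f(x)\le f(x_0)\}$.
   Context: Assumptions: (A1) $\lim_{|x|\to\infty} f(x)=+\infty$; (A2) $\nabla f(x)\neq 0$ for all $x\in\Omega=\{x:g(x)\le 0\}$; (A3) $\nabla g(x)\neq 0$ for all $x\in\Omega$; (A4) $f$ and $g$ are twice continuously differentiable. For $\zeta\in[0,1)$ define the vector field $\mathbf{s}_\zeta(x)=-\frac{\nabla f(x)}{|\nabla f(x)|}-\zeta\frac{\nabla g(x)}{|\nabla g(x)|}$ ($|\cdot|$ the Euclidean norm), defined on $E=\{x\in\mathbb{R}^n: \nabla f(x)\neq 0,\ \nabla g(x)\neq 0\}$. The trajectory $x(t;\zeta,x_0)$ is the solution of $\frac{dx}{dt}=\mathbf{s}_\zeta(x)$, $x(0)=x_0$, on its maximal interval of existence $[0,T_{\zeta,x_0})$ in $E$. *)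

(* Defs.v *)
From HB Require Import structures.
From mathcomp Require Import all_boot all_order all_algebra.
From mathcomp Require Import all_classical all_reals all_analysis.
Set Implicit Arguments. Unset Strict Implicit. Unset Printing Implicit Defensive.
Import Order.TTheory GRing.Theory Num.Theory.
Import numFieldNormedType.Exports.
Local Open Scope ring_scope.
Local Open Scope classical_set_scope.

Section Defs.
Variables (R : realType) (n : nat).

Definition ebasis (i : 'I_n) : 'rV[R]_n := delta_mx 0 i.

Definition partial (i : 'I_n) (h : 'rV[R]_n -> R) (x : 'rV[R]_n) : R :=
  'D_(ebasis i) h x.

Definition grad (h : 'rV[R]_n -> R) (x : 'rV[R]_n) : 'rV[R]_n :=
  \row_i partial i h x.

Definition enorm (v : 'rV[R]_n) : R := Num.sqrt (\sum_i v 0 i ^+ 2).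

Definition C2 (h : 'rV[R]_n -> R) : Prop :=
  continuous h /\
  forall i : 'I_n,
    (forall x, derivable h x (ebasis i)) /\ continuous (partial i h) /\
    forall j : 'I_n,
      (forall x, derivable (partial i h) x (ebasis j)) /\
      continuous (partial j (partial i h)).

Definition coercive (h : 'rV[R]_n -> R) : Prop :=
  forall M : R, exists r : R, forall x, r <= enorm x -> M <= h x.

Definition Eset (f g : 'rV[R]_n -> R) (x : 'rV[R]_n) : Prop :=
  grad f x != 0 /\ grad g x != 0.

Definition sfield (f g : 'rV[R]_n -> R) (zeta : R) (x : 'rV[R]_n) : 'rV[R]_n :=
  - ((enorm (grad f x))^-1 *: grad f x) - zeta *: ((enorm (grad g x))^-1 *: grad g x).

(* x : R -> R^n solves dx/dt = s_zeta(x), x(0) = x0 on [0, T) (T possibly +oo),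
   staying in E; at t = 0 the derivative is one-sided (from the right). *)
Definition is_trajectory (f g : 'rV[R]_n -> R) (zeta : R) (x0 : 'rV[R]_n)
    (T : \bar R) (x : R -> 'rV[R]_n) : Prop :=
  (0 < T)%E /\ x 0 = x0 /\
  (forall t : R, 0 <= t -> (t%:E < T)%E -> Eset f g (x t)) /\
  (forall t : R, 0 < t -> (t%:E < T)%E -> is_derive t 1 x (sfield f g zeta (x t))) /\
  (fun h : R => h^-1 *: (x h - x 0)) @ (0:R)^'+ --> sfield f g zeta (x 0).

End Defs.

(* Main.v *)
Require Import Defs.
From HB Require Import structures.
From mathcomp Require Import all_boot all_order all_algebra.
From mathcomp Require Import all_classical all_reals all_analysis.
From mathcomp Require Import ring lra.
Import Order.TTheory GRing.Theory Num.Theory.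
Import numFieldNormedType.Exports.
Local Open Scope ring_scope.


Section Alg.
Variables (R : realType) (n : nat).

Lemma enorm_ge0 (a : 'rV[R]_n) : 0 <= enorm a.
Proof. exact: sqrtr_ge0. Qed.

Lemma enorm_sq (a : 'rV[R]_n) : enorm a ^+ 2 = \sum_i a 0 i ^+ 2.
Proof. by rewrite /enorm sqr_sqrtr // sumr_ge0 // => i _; exact: sqr_ge0. Qed.

Lemma enorm0P {a : 'rV[R]_n} : enorm a = 0 -> forall i, a 0 i = 0.
Proof.
move=> h i; have : \sum_i a 0 i ^+ 2 = 0 by rewrite -enorm_sq h expr0n.
move/psumr_eq0P => H; apply/eqP; rewrite -sqrf_eq0; apply/eqP/H => // j _.
exact: sqr_ge0.
Qed.

Lemma CS (a b : 'rV[R]_n) : - (\sum_i a 0 i * b 0 i) <= enorm a * enorm b.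
Proof.
have [a0|] := eqVneq (enorm a) 0.
  rewrite a0 mul0r big1 ?oppr0 // => i _; by rewrite (enorm0P a0) mul0r.
have [b0|] := eqVneq (enorm b) 0.
  rewrite b0 mulr0 big1 ?oppr0 // => i _; by rewrite (enorm0P b0) mulr0.
move=> bn an.
have ha := enorm_ge0 a; have hb := enorm_ge0 b.
have pa : 0 < enorm a by rewrite lt_def an.
have pb : 0 < enorm b by rewrite lt_def bn.
have H : 0 <= \sum_i (enorm b * a 0 i + enorm a * b 0 i) ^+ 2.
  by apply: sumr_ge0 => i _; exact: sqr_ge0.
have E : \sum_i (enorm b * a 0 i + enorm a * b 0 i) ^+ 2 =
   enorm b ^+ 2 * \sum_i a 0 i ^+ 2 + 2 * (enorm a * enorm b) * \sum_i a 0 i * b 0 i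
   + enorm a ^+ 2 * \sum_i b 0 i ^+ 2.
  rewrite !mulr_sumr -!big_split /=; apply: eq_bigr => i _; ring.
rewrite E -!enorm_sq in H.
have pab : 0 < enorm a * enorm b by exact: mulr_gt0.
set s := \sum_i _ in H *.
set p := enorm a * enorm b in H pab *.
have : 0 <= 2 * p * (p + s).
  suff -> : 2 * p * (p + s) = enorm b ^+ 2 * enorm a ^+ 2 + 2 * p * s + enorm a ^+ 2 * enorm b ^+ 2 by [].
  rewrite /p; ring.
rewrite pmulr_rge0 ?mulr_gt0 //; lra.
Qed.

Lemma sfield_dot (f g : 'rV[R]_n -> R) zeta y : 0 <= zeta -> zeta <= 1 ->
  \sum_i grad f y 0 i * sfield f g zeta y 0 i <= 0.
Proof.
move=> z0 z1; set a := grad f y; set b := grad g y.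
have -> : \sum_i a 0 i * sfield f g zeta y 0 i =
   - ((enorm a)^-1 * \sum_i a 0 i ^+ 2) - zeta * ((enorm b)^-1 * \sum_i a 0 i * b 0 i).
  rewrite !mulr_sumr -sumrN -!sumrN -big_split /=; apply: eq_bigr => i _.
  rewrite /sfield !mxE -/a -/b; ring.
rewrite -enorm_sq.
have ha := enorm_ge0 a; have hb := enorm_ge0 b.
have -> : (enorm a)^-1 * enorm a ^+ 2 = enorm a.
  have [->|an] := eqVneq (enorm a) 0; first by rewrite expr0n /= mulr0.
  by rewrite expr2 mulrA mulVf // mul1r.
have cs := CS a b.
have : - ((enorm b)^-1 * \sum_i a 0 i * b 0 i) <= enorm a.
  have [b0|bn] := eqVneq (enorm b) 0; first by rewrite b0 invr0 mul0r oppr0.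
  have pb : 0 < enorm b by rewrite lt_def bn.
  rewrite -mulrN ler_pdivrMl //; lra.
set u := (enorm b)^-1 * _ => hu.
have : zeta * (- u) <= zeta * enorm a by rewrite ler_wpM2l.
nra.
Qed.
End Alg.


Section MV.
Variables (R : realType) (n : nat).
Local Open Scope classical_set_scope.

Lemma is_deriveI (V : normedModType R) (F : R -> V) t l :
  (fun h : R => h^-1 *: (F (h + t) - F t)) @ (0:R)^' --> l -> is_derive t 1 F l.
Proof.
move=> H.
have E : (fun h : R => h^-1 *: ((F \o shift t) (h *: 1) - F t)) =
         (fun h : R => h^-1 *: (F (h + t) - F t)).
  by apply/funext => h /=; rewrite /shift /= [h *: 1]mulr1.
split; first by apply/cvg_ex; exists l; rewrite /derivable E.
by rewrite /derive E; exact: cvg_lim.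
Qed.

Lemma line_derive (f : 'rV[R]_n -> R) (p v : 'rV[R]_n) u :
  derivable f (p + u *: v) v ->
  is_derive u 1 (fun s : R => f (p + s *: v)) ('D_v f (p + u *: v)).
Proof.
move=> d.
have E : (fun h : R => h^-1 *: (f (p + (h + u) *: v) - f (p + u *: v))) =
  (fun h : R => h^-1 *: ((f \o shift (p + u *: v)) (h *: v) - f (p + u *: v))).
  by apply/funext => h /=; rewrite /shift /= scalerDl addrCA addrA [p + _]addrC.
apply: is_deriveI; rewrite E; exact: d.
Qed.

Lemma dirMVT (f : 'rV[R]_n -> R) (v p : 'rV[R]_n) (s : R) :
  (forall y, derivable f y v) ->
  exists c, `|c| <= `|s| /\ f (p + s *: v) - f p = s * 'D_v f (p + c *: v).
Proof.
move=> d.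
set G := fun s : R => f (p + s *: v).
have dG (u : R) : is_derive u (1:R) G ('D_v f (p + u *: v)) by exact: line_derive.
have cG (a b : R) : {within `[a, b], continuous G}.
  apply: derivable_within_continuous => u _; exact: (@ex_derive _ _ _ _ _ _ _ (dG u)).
have G0 : G 0 = f p by rewrite /G scale0r addr0.
have [s0|s0] := leP 0 s.
  have [c cI E] := MVT_segment s0 (fun u _ => dG u) (cG 0 s).
  exists c; split.
    move: cI; rewrite in_itv /= => /andP[c0 cs].
    by rewrite !ger0_norm //; apply: le_trans cs.
  by move: E; rewrite G0 subr0 mulrC.
have [c cI E] := MVT_segment (ltW s0) (fun u _ => dG u) (cG s 0).
exists c; split.
  move: cI; rewrite in_itv /= => /andP[sc c0].
  rewrite !ler0_norm //; first by rewrite lerN2.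
  exact: ltW.
move: E; rewrite G0 sub0r mulrN => E.
rewrite /G in E *; rewrite mulrC; lra.
Qed.
End MV.


Section Ch.
Variables (R : realType) (n : nat).
Local Open Scope classical_set_scope.

Lemma mx_entry_le (M N : 'rV[R]_n) : (forall j, `|M 0 j| <= `|N 0 j|) -> `|M| <= `|N|.
Proof.
move=> H; change (mx_norm M <= mx_norm N); rewrite !mx_normrE.
apply: bigmax_le => [|[i j] _ /=]; first by rewrite -mx_normrE; exact: (normr_ge0 N).
rewrite [i]ord1.
apply: le_trans (H j) _.
exact: (le_bigmax 0 (fun ij : 'I_1 * 'I_n => `|N ij.1 ij.2|) (ord0, j)).
Qed.

Definition Pk (k : nat) (d : 'rV[R]_n) : 'rV[R]_n :=
  \row_i (if (i < k)%N then d 0 i else 0).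

Lemma Pk0 d : Pk 0 d = 0.
Proof. by apply/rowP => i; rewrite !mxE. Qed.

Lemma Pkn d : Pk n d = d.
Proof. by apply/rowP => i; rewrite !mxE ltn_ord. Qed.

Lemma PkS (k : 'I_n) d : Pk k.+1 d = Pk k d + d 0 k *: ebasis R k.
Proof.
apply/rowP => i; rewrite !mxE /=.
rewrite ltnS leq_eqVlt; case: (ltnP i k) => ik.
  rewrite orbT; have -> : (i == k :> 'I_n) = false.
    by apply/negbTE; rewrite -val_eqE /= neq_ltn ik.
  by rewrite mulr0 addr0.
rewrite orbF val_eqE; case: eqP => [->|_]; first by rewrite mulr1 add0r.
by rewrite mulr0 addr0.
Qed.

Lemma Pk_le (k : 'I_n) (d : 'rV[R]_n) (c : R) :
  `|c| <= `|d 0 k| -> `|Pk k d + c *: ebasis R k| <= `|d|.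
Proof.
move=> cd; apply: mx_entry_le => j; rewrite !mxE /=.
case: (ltnP j k) => jk.
  have -> : (j == k :> 'I_n) = false.
    by apply/negbTE; rewrite -val_eqE /= neq_ltn jk.
  by rewrite mulr0 addr0.
rewrite add0r; case: (eqVneq j k) => [->|_]; first by rewrite mulr1.
by rewrite mulr0 normr0.
Qed.

End Ch.
Arguments Pk {R n}.
Arguments Pk_le {R n}.
Arguments PkS {R n}.

Section Ch2.
Variables (R : realType) (n : nat).
Local Open Scope classical_set_scope.

Lemma derive_cvg (V : normedModType R) (F : R -> V) (t : R) (l : V) : is_derive t (1:R) F l ->
  (fun h : R => h^-1 *: (F (h + t) - F t)) @ (0:R)^' --> l.
Proof.
move=> [d dv].
have E : (fun h : R => h^-1 *: ((F \o shift t) (h *: 1) - F t)) =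
         (fun h : R => h^-1 *: (F (h + t) - F t)).
  by apply/funext => h /=; rewrite /shift /= [h *: 1]mulr1.
move: d; rewrite /derivable E => d.
by rewrite -dv /derive E.
Qed.

Lemma chain (f : 'rV[R]_n -> R) (x : R -> 'rV[R]_n) (t : R) (v : 'rV[R]_n) :
  (forall i, (forall y, derivable f y (ebasis R i)) /\ continuous (partial i f)) ->
  is_derive t (1:R) x v ->
  is_derive t (1:R) (f \o x) (\sum_i partial i f (x t) * v 0 i).
Proof.
move=> Hf dx.
set y := x t.
pose D : R -> 'rV[R]_n := fun h => x (h + t) - y.
have Hq : (fun h => h^-1 *: D h) @ (0:R)^' --> v := @derive_cvg _ _ _ _ dx.
have HD : D @ (0:R)^' --> (0 : 'rV[R]_n).
  apply: (@cvg_trans _ ((fun h => h *: (h^-1 *: D h)) @ (0:R)^')).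
    apply: near_eq_cvg; near=> h.
    rewrite scalerA mulfV ?scale1r //.
    near: h; exact: nbhs_dnbhs_neq.
  rewrite -(scale0r v); apply: cvgZ => //.
  exact: nbhs_dnbhs.
have Hc : forall hk : R * 'I_n, exists c : R, `|c| <= `|D hk.1 0 hk.2| /\
    f (y + Pk hk.2 (D hk.1) + D hk.1 0 hk.2 *: ebasis R hk.2) - f (y + Pk hk.2 (D hk.1))
    = D hk.1 0 hk.2 * partial hk.2 f (y + Pk hk.2 (D hk.1) + c *: ebasis R hk.2).
  move=> [h k]; exact: dirMVT (Hf k).1.
have [C HC] := choice Hc.
pose Z (h : R) (k : 'I_n) := y + Pk k (D h) + C (h, k) *: ebasis R k.
have Eq : (fun h : R => h^-1 *: ((f \o x) (h + t) - (f \o x) t)) =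
    (fun h => \sum_(k < n) (h^-1 * D h 0 k) * partial k f (Z h k)).
  apply/funext => h /=.
  have -> : x (h + t) = y + Pk n (D h) by rewrite Pkn /D addrCA subrr addr0.
  have T := @telescope_sumr _ 0 n (fun k => f (y + Pk k (D h))) (leq0n n).
  rewrite /= Pk0 addr0 in T.
  rewrite -/y -T big_mkord.
  rewrite [_ *: _]mulr_sumr; apply: eq_bigr => k _.
  rewrite PkS addrA (HC (h, k)).2 /=; rewrite /Z; ring.
apply: is_deriveI; rewrite Eq.
apply: cvg_big.
  exact: add_continuous.
move=> k _; rewrite [X in _ --> X]mulrC.
apply: cvgM.
  have E2 : (fun h => h^-1 * D h 0 k) = (fun M : 'rV[R]_n => M 0 k) \o (fun h => h^-1 *: D h).
    by apply/funext => h; rewrite /comp !mxE.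
  rewrite E2; apply: cvg_comp Hq _; exact: coord_continuous.
have HZ : (fun h => Z h k) @ (0:R)^' --> y.
  apply/cvgrPdist_lt => e e0.
  move/cvgrPdist_lt: HD => /(_ e e0); apply: filterS => h Hh.
  have E3 : forall a b c : 'rV[R]_n, a - (a + b + c) = - (b + c).
    by move=> a b c; rewrite -addrA opprD addrA subrr add0r.
  rewrite /Z E3 normrN.
  rewrite sub0r normrN in Hh.
  apply: le_lt_trans (Pk_le _ _ _ (HC (h, k)).1) Hh.
apply: cvg_comp HZ _; exact: (Hf k).2.
Unshelve. all: by end_near.
Qed.
End Ch2.


Theorem lemma5p2 (R : realType) (n : nat) (f g : 'rV[R]_n -> R)
    (zeta : R) (x0 : 'rV[R]_n) (T : \bar R) (x : R -> 'rV[R]_n) :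
  coercive f ->
  (forall y, g y <= 0 -> grad f y != 0) ->
  (forall y, g y <= 0 -> grad g y != 0) ->
  C2 f -> C2 g ->
  0 <= zeta -> zeta < 1 ->
  g x0 <= 0 ->
  is_trajectory f g zeta x0 T x ->
  forall t : R, 0 <= t -> (t%:E < T)%E -> f (x t) <= f x0.
Proof.
Local Open Scope classical_set_scope.
move=> _ _ _ Cf _ z0 z1 _ [T0 [x00 [_ [Hd Hr]]]] t t0 tT.
have Hfi : forall i, (forall y, derivable f y (ebasis R i)) /\ continuous (partial i f).
  by move=> i; have [a [b _]] := Cf.2 i; split.
move: t0; rewrite le_eqVlt => /predU1P[<-|tp]; first by rewrite x00.
have sT s : s <= t -> (s%:E < T)%E.
  by move=> st; apply: le_lt_trans tT; rewrite lee_fin.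
have dphi s : 0 < s -> s <= t ->
    is_derive s (1:R) (f \o x) (\sum_i partial i f (x s) * sfield f g zeta (x s) 0 i).
  by move=> s0 st; apply: chain => //; apply: Hd => //; exact: sT.
have Hcont : {within `[0, t], continuous (f \o x)}.
  apply/continuous_within_itvP => //; split.
  - move=> s; rewrite in_itv /= => /andP[s0 st].
    apply: differentiable_continuous; apply/derivable1_diffP.
    exact: (@ex_derive _ _ _ _ _ _ _ (dphi s s0 (ltW st))).
  - have Hx : x @ (0:R)^'+ --> x 0.
      apply: (@cvg_trans _ ((fun h => x 0 + h *: (h^-1 *: (x h - x 0))) @ (0:R)^'+)).
        apply: near_eq_cvg; near=> h.
        have hp : 0 < h by near: h; exact: nbhs_right_gt.
        by rewrite scalerA mulfV ?gt_eqF // scale1r addrCA subrr addr0.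
      apply: cvg_trans.
        apply: cvgD; first exact: cvg_cst.
        apply: cvgZ; [exact: cvg_within | exact: Hr].
      by rewrite scale0r addr0 => A.
    exact: cvg_comp Hx (Cf.1 (x 0)).
  - apply: cvg_at_left_filter.
    apply: differentiable_continuous; apply/derivable1_diffP.
    exact: (@ex_derive _ _ _ _ _ _ _ (dphi t tp (lexx t))).
have df : forall s, s \in `]0, t[%R -> derivable (f \o x) s 1.
  move=> s; rewrite in_itv /= => /andP[s0 st].
  exact: (@ex_derive _ _ _ _ _ _ _ (dphi s s0 (ltW st))).
have dfle : forall s, s \in `]0, t[%R -> (f \o x)^`() s <= 0.
  move=> s; rewrite in_itv /= => /andP[s0 st].
  rewrite derive1E (@derive_val _ _ _ _ _ _ _ (dphi s s0 (ltW st))).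
  have E : \sum_i partial i f (x s) * sfield f g zeta (x s) 0 i =
           \sum_i grad f (x s) 0 i * sfield f g zeta (x s) 0 i.
    by apply: eq_bigr => i _; rewrite /grad mxE.
  rewrite E; apply: sfield_dot => //; exact: ltW.
have H := @ler0_derive1_le_cc R (f \o x) 0 t df dfle Hcont.
rewrite -x00; apply: (H _ _ _ _ (ltW tp)).
- by rewrite in_itv /= lexx ltW.
- by rewrite in_itv /= lexx ltW.
Unshelve. all: by end_near.
Qed.
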